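(* Let $p$ be a prime, $k\geq 1$, $j\geq 0$ integers, and $r$ an integer with $1\leq r\leq p-1$. If $d_k(pn+r)\equiv 0\pmod p$ for all $n\geq 0$, then $d_{pj+k}(pn+r)\equiv 0\pmod p$ for all $n\geq 0$.
   Context: For each integer $k\geq 1$, the numbers $d_k(n)$ are defined by $\sum_{n\geq 0} d_k(n)q^n = \frac{f_2^k}{f_1^{3k+1}}$, where $f_r = \prod_{i\geq 1}(1-q^{ri})$. *)

(* Defs.v *)
From mathcomp Require Import all_boot all_order all_algebra.
Set Implicit Arguments. Unset Strict Implicit. Unset Printing Implicit Defensive.
Import GRing.Theory.
Local Open Scope ring_scope.

(* Truncation of f_r = prod_{i>=1} (1 - q^{r i}) to the factors i = 1..N,
   as a polynomial over int.  Its coefficients of q^m agree with those of f_r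
   for all m <= N (r >= 1). *)
Definition f_trunc (r N : nat) : {poly int} :=
  \prod_(1 <= i < N.+1) (1 - 'X^(r * i)).

(* Truncation of 1/f_1 = prod_{i>=1} 1/(1 - q^i) = prod_{i>=1} sum_{j>=0} q^{i j}
   to factors i = 1..N and geometric sums j = 0..N.  Its coefficients of q^m
   agree with those of 1/f_1 for all m <= N. *)
Definition inv_f1_trunc (N : nat) : {poly int} :=
  \prod_(1 <= i < N.+1) \sum_(0 <= j < N.+1) 'X^(i * j).

(* d_k(n) = coefficient of q^n in f_2^k / f_1^(3k+1). *)
Definition d (k n : nat) : int :=
  ((f_trunc 2 n) ^+ k * (inv_f1_trunc n) ^+ (3 * k + 1)) `_ n.

(* Main.v *)
Require Import Defs.
From mathcomp Require Import all_boot all_order all_algebra all_field.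
From mathcomp Require Import zify.
Set Implicit Arguments. Unset Strict Implicit. Unset Printing Implicit Defensive.
Import GRing.Theory.
Local Open Scope ring_scope.

Section Eqm.
Variable R : comNzRingType.
Definition eqm (m : nat) (a b : {poly R}) := forall i, (i < m)%N -> a`_i = b`_i.

Lemma eqm_refl m a : eqm m a a. Proof. by []. Qed.
Lemma eqm_sym m a b : eqm m a b -> eqm m b a. Proof. by move=> h i /h ->. Qed.
Lemma eqm_trans m a b c : eqm m a b -> eqm m b c -> eqm m a c.
Proof. by move=> h1 h2 i hi; rewrite h1 // h2. Qed.
Lemma eqmD m a b c e : eqm m a b -> eqm m c e -> eqm m (a + c) (b + e).
Proof. by move=> h1 h2 i hi; rewrite !coefD h1 // h2. Qed.
Lemma eqmB m a b c e : eqm m a b -> eqm m c e -> eqm m (a - c) (b - e).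
Proof. by move=> h1 h2 i hi; rewrite !coefB h1 // h2. Qed.
Lemma eqmM m a b c e : eqm m a b -> eqm m c e -> eqm m (a * c) (b * e).
Proof.
move=> h1 h2 i hi; rewrite !coefM; apply: eq_bigr => j _.
have := ltn_ord j => hj; rewrite h1 ?h2 //; lia.
Qed.
Lemma eqmX m a b k : eqm m a b -> eqm m (a ^+ k) (b ^+ k).
Proof. by move=> h; elim: k => [|k IH]; rewrite ?expr0 // !exprS; apply: eqmM. Qed.
Lemma eqmXn0 m t : (m <= t)%N -> eqm m ('X^t) 0.
Proof. by move=> ht i hi; rewrite coefXn coef0; case: eqP => // ?; subst; rewrite leqNgt hi in ht. Qed.
Lemma eqm_prod m (I : Type) (s : seq I) (P : pred I) (F G : I -> {poly R}) :
  (forall i, P i -> eqm m (F i) (G i)) ->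
  eqm m (\prod_(i <- s | P i) F i) (\prod_(i <- s | P i) G i).
Proof. move=> h; apply: (big_ind2 (eqm m)) => //; exact: eqmM. Qed.
Lemma eqm_sum m (I : Type) (s : seq I) (P : pred I) (F G : I -> {poly R}) :
  (forall i, P i -> eqm m (F i) (G i)) ->
  eqm m (\sum_(i <- s | P i) F i) (\sum_(i <- s | P i) G i).
Proof. move=> h; apply: (big_ind2 (eqm m)) => //; exact: eqmD. Qed.
Lemma eqm_prod1 m (I : Type) (s : seq I) (P : pred I) (F : I -> {poly R}) :
  (forall i, P i -> eqm m (F i) 1) -> eqm m (\prod_(i <- s | P i) F i) 1.
Proof.
move=> h; apply: (big_ind (fun x => eqm m x 1)) => // x y hx hy.
by rewrite -[1]mulr1; apply: eqmM.
Qed.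
Lemma eqm_sum0 m (I : Type) (s : seq I) (P : pred I) (F : I -> {poly R}) :
  (forall i, P i -> eqm m (F i) 0) -> eqm m (\sum_(i <- s | P i) F i) 0.
Proof.
move=> h; apply: (big_ind (fun x => eqm m x 0)) => // x y hx hy.
by rewrite -[0]addr0; apply: eqmD.
Qed.
End Eqm.

Lemma f_trunc_eqm n N : (n <= N)%N -> eqm n.+1 (f_trunc 2 N) (f_trunc 2 n).
Proof.
move=> hN; rewrite /f_trunc (big_cat_nat _ (n := n.+1)) //=.
rewrite -[X in eqm _ _ X]mulr1; apply: eqmM => //.
rewrite big_nat_cond; apply: eqm_prod1 => i /andP[/andP[hi _] _].
rewrite -[X in eqm _ _ X]subr0; apply: eqmB => //; apply: eqmXn0.
by apply: leq_trans hi _; rewrite leq_pmull.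
Qed.

Lemma inv_f1_eqm n N : (n <= N)%N -> eqm n.+1 (inv_f1_trunc N) (inv_f1_trunc n).
Proof.
move=> hN; rewrite /inv_f1_trunc (big_cat_nat _ (n := n.+1)) //=.
rewrite -[X in eqm _ _ X]mulr1; apply: eqmM.
  rewrite big_nat_cond [X in eqm _ _ X]big_nat_cond.
  apply: eqm_prod => i /andP[/andP[hi _] _].
  rewrite (big_cat_nat _ (n := n.+1)) //= -[X in eqm _ _ X]addr0; apply: eqmD => //.
  rewrite big_nat_cond; apply: eqm_sum0 => j /andP[/andP[hj _] _].
  apply: eqmXn0; apply: leq_trans hj _; rewrite leq_pmull //.
rewrite big_nat_cond; apply: eqm_prod1 => i /andP[/andP[hi _] _].
rewrite big_ltn // muln0 expr0 -[X in eqm _ _ X]addr0; apply: eqmD => //.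
rewrite big_nat_cond; apply: eqm_sum0 => j /andP[/andP[hj _] _].
apply: eqmXn0; apply: leq_trans hi _; rewrite leq_pmulr //.
Qed.

Lemma trunc_coef k e n N : (n <= N)%N ->
  (f_trunc 2 N ^+ k * inv_f1_trunc N ^+ e)`_n = (f_trunc 2 n ^+ k * inv_f1_trunc n ^+ e)`_n.
Proof.
move=> hN; apply: (@eqmM _ n.+1) => //; apply: eqmX.
  exact: f_trunc_eqm. exact: inv_f1_eqm.
Qed.
Lemma frobX (p : nat) (pp : prime p) (a : {poly 'F_p}) : a ^+ p = a \Po 'X^p.
Proof.
have chP : p \in [pchar {poly 'F_p}] by rewrite pchar_poly; exact: pchar_Fp.
have fE x : x ^+ p = pFrobenius_aut chP x by [].
elim/poly_ind: a => [|a c IH].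
  by rewrite comp_poly0 expr0n (gtn_eqF (prime_gt0 pp)).
rewrite fE rmorphD rmorphM /= -!fE IH comp_polyD comp_polyM comp_polyX comp_polyC.
congr (_ * _ + _).
rewrite -rmorphXn /=; congr (_ %:P).
by have := expf_card c; rewrite card_Fp.
Qed.

Lemma dvdz_Fp p (pp : prime p) (z : int) : (p%:Z %| z)%Z = ((z%:~R : 'F_p) == 0).
Proof.
have chP := pchar_Fp pp.
case: z => n; rewrite dvdzE /=.
  by rewrite (dvdn_pcharf chP) pmulrn.
rewrite -[(Negz n)%:~R]/(- (n.+1)%:R : 'F_p).
by rewrite oppr_eq0 (dvdn_pcharf chP).
Qed.

Theorem theorem4p4 (p k j r : nat) :
  prime p -> (1 <= k)%N -> (1 <= r)%N -> (r <= p - 1)%N ->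
  (forall n : nat, (p%:Z %| d k (p * n + r))%Z) ->
  forall n : nat, (p%:Z %| d (p * j + k) (p * n + r))%Z.
Proof.
move=> pp hk hr1 hrp hyp n.
have p0 : (0 < p)%N := prime_gt0 pp.
rewrite dvdz_Fp // /d.
set M := (p * n + r)%N.
set P := f_trunc 2 M; set Q := inv_f1_trunc M.
set A := P ^+ k * Q ^+ (3 * k + 1).
have E : P ^+ (p * j + k) * Q ^+ (3 * (p * j + k) + 1) = A * ((P * Q ^+ 3) ^+ j) ^+ p.
  rewrite -exprM exprMn -exprM /A.
  have -> : (3 * (p * j + k) + 1 = (3 * k + 1) + 3 * (j * p))%N by lia.
  have -> : (p * j + k = k + j * p)%N by lia.
  by rewrite !exprD mulrACA.
rewrite E -coef_map rmorphM rmorphXn /= frobX // mulrC coefM.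
apply/eqP; apply: big1 => i _.
rewrite coef_comp_poly_Xn //; case: dvdnP => [[m him]|_]; last by rewrite mul0r.
have hi := ltn_ord i; rewrite him in hi *.
rewrite mulnK //.
have hm : (m <= n)%N.
  rewrite leqNgt; apply/negP => hmn.
  have : (p * n.+1 <= m * p)%N by rewrite mulnC leq_mul2r hmn orbT.
  rewrite /M in hi; lia.
have -> : (M - m * p = p * (n - m) + r)%N.
  have e : (p * n = p * (n - m) + m * p)%N by rewrite [(m * p)%N]mulnC -mulnDr subnK.
  by rewrite /M e -addnA [(m * p + r)%N]addnC addnA addnK.
rewrite [X in _ * X]coef_map /= /A /P /Q (@trunc_coef _ _ (p * (n - m) + r)%N M); last first.
  by rewrite /M leq_add2r leq_mul2l leq_subr orbT.
by have := hyp (n - m)%N; rewrite dvdz_Fp // /d => /eqP ->; rewrite mulr0.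
Qed.
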